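(* Let $I$ be an interval and let $a(t,x)$, $\eta(t,x)$ be real functions on $I\times\mathbf{R}^d$ with $\nabla\eta\in L^\infty(I\times\mathbf{R}^d)$, $a\in L^\infty(I\times\mathbf{R}^d)$ and $a\ge c>0$. Set $\mathcal U(t,x,\xi)=(1+|\nabla\eta|^2)|\xi|^2-(\xi\cdot\nabla\eta)^2$ and $\gamma=(a^2\mathcal U)^{1/4}$. Then there exists $c_0>0$ such that $|\det\operatorname{Hess}_\xi\gamma(t,x,\xi)|\ge c_0$ for all $t\in I$, $x\in\mathbf{R}^d$, $\xi\in\mathcal C_0=\{\frac12\le|\xi|\le2\}$.
   Context: $\operatorname{Hess}_\xi\gamma=\big(\partial^2\gamma/\partial\xi_j\partial\xi_k\big)_{j,k}$. *)

(* Defs.v *)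
(* classical reals. Vectors of R^d are functions nat -> R,
   of which only the coordinates 0..d-1 are used. *)
From Stdlib Require Import Reals Lra.
Open Scope R_scope.

Fixpoint rsum (n : nat) (f : nat -> R) : R :=
  match n with O => 0 | S m => rsum m f + f m end.

Definition sqnorm (d : nat) (v : nat -> R) : R := rsum d (fun i => v i * v i).
Definition dot (d : nat) (u v : nat -> R) : R := rsum d (fun i => u i * v i).

Definition shift (x : nat -> R) (i : nat) (s : R) : nat -> R :=
  fun j => if Nat.eqb j i then x j + s else x j.

Definition is_partial (f : (nat -> R) -> R) (x : nat -> R) (i : nat) (l : R) : Prop :=
  derivable_pt_lim (fun s => f (shift x i s)) 0 l.

Definition is_hessian (d : nat) (f : (nat -> R) -> R) (x : nat -> R)
    (H : nat -> nat -> R) : Prop :=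
  exists (delta : R) (G : (nat -> R) -> nat -> R),
    0 < delta /\
    (forall y, sqnorm d (fun i => y i - x i) < delta * delta ->
       forall k, (k < d)%nat -> is_partial f y k (G y k)) /\
    (forall j k, (j < d)%nat -> (k < d)%nat ->
       is_partial (fun y => G y k) x j (H j k)).

Fixpoint det (n : nat) (A : nat -> nat -> R) : R :=
  match n with
  | O => 1
  | S m => rsum (S m) (fun j =>
      (-1) ^ j * A O j *
      det m (fun i k => A (S i) (if Nat.ltb k j then k else S k)))
  end.

(* U(t,x,xi) = (1+|grad eta|^2)|xi|^2 - (xi . grad eta)^2, with p = grad eta(t,x) *)
Definition Ufun (d : nat) (p : nat -> R) (xi : nat -> R) : R :=
  (1 + sqnorm d p) * sqnorm d xi - (dot d xi p) ^ 2.

Definition gammafun (d : nat) (a : R) (p : nat -> R) (xi : nat -> R) : R :=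
  Rpower (a ^ 2 * Ufun d p xi) (/ 4).

Definition is_interval (I : R -> Prop) : Prop :=
  forall s u v, I s -> I u -> s <= v <= u -> I v.

(* Main.v *)
Require Import Defs.
From Stdlib Require Import Reals.
Open Scope R_scope.
From Stdlib Require Import Lra Lia FunctionalExtensionality.
Lemma rsum_ext n f g : (forall i, (i < n)%nat -> f i = g i) -> rsum n f = rsum n g.
Proof.
induction n; simpl; intros H; [reflexivity|].
rewrite IHn by (intros; apply H; lia). rewrite H by lia. reflexivity.
Qed.

Lemma rsum_lin n a b c f g h :
  rsum n (fun i => a * f i + b * g i + c * h i) = a * rsum n f + b * rsum n g + c * rsum n h.
Proof. induction n; simpl; [ring|rewrite IHn; ring]. Qed.

Lemma rsum_shift n k y s (F : nat -> R -> R) : (k < n)%nat ->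
  rsum n (fun i => F i (shift y k s i)) = rsum n (fun i => F i (y i)) - F k (y k) + F k (y k + s).
Proof.
induction n; intros Hk; [lia|]. simpl.
destruct (Nat.eq_dec k n) as [->|Hne].
- rewrite (rsum_ext n (fun i => F i (shift y n s i)) (fun i => F i (y i))).
  + unfold shift. rewrite Nat.eqb_refl. ring.
  + intros i Hi. unfold shift. replace (Nat.eqb i n) with false; [reflexivity|].
    symmetry; apply Nat.eqb_neq; lia.
- rewrite IHn by lia.
  replace (shift y k s n) with (y n)
    by (unfold shift; replace (Nat.eqb n k) with false by (symmetry; apply Nat.eqb_neq; lia); reflexivity).
  ring.
Qed.

Lemma sqnorm_shift d y k s : (k < d)%nat ->
  sqnorm d (shift y k s) = sqnorm d y + 2 * s * y k + s * s.
Proof.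
intros Hk. unfold sqnorm.
rewrite (rsum_shift d k y s (fun i v => v * v)) by exact Hk. ring.
Qed.

Lemma dot_shift d y p k s : (k < d)%nat ->
  dot d (shift y k s) p = dot d y p + s * p k.
Proof.
intros Hk. unfold dot.
rewrite (rsum_shift d k y s (fun i v => v * p i)) by exact Hk. ring.
Qed.

Lemma sqnorm_ge0' d p : 0 <= sqnorm d p.
Proof.
unfold sqnorm; induction d; simpl; [lra|].
pose proof (Rle_0_sqr (p d)); unfold Rsqr in *; lra.
Qed.

Lemma CS d y p : (dot d y p) ^ 2 <= sqnorm d y * sqnorm d p.
Proof.
assert (E : forall t, sqnorm d (fun i => y i + t * p i) =
   sqnorm d y + 2 * t * dot d y p + t * t * sqnorm d p).
{ intros t. unfold sqnorm, dot.
  transitivity (1 * rsum d (fun i => y i * y i) + 2 * t * rsum d (fun i => y i * p i)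
     + t * t * rsum d (fun i => p i * p i)); [|ring].
  rewrite <- rsum_lin. apply rsum_ext; intros; ring. }
set (Y := sqnorm d y) in *. set (P := sqnorm d p) in *. set (D := dot d y p) in *.
assert (Hn : forall t, 0 <= Y + 2 * t * D + t * t * P).
{ intros t; rewrite <- E; apply sqnorm_ge0'. }
pose proof (sqnorm_ge0' d p) as HP; fold P in HP.
destruct (Req_dec P 0) as [HP0|HP0].
- destruct (Req_dec D 0) as [HD|HD].
  + rewrite HD, HP0; lra.
  + specialize (Hn (- (Y + 1) / (2 * D))). rewrite HP0 in Hn.
    replace (Y + 2 * (- (Y + 1) / (2 * D)) * D) with (-1) in Hn by (field; auto). lra.
- specialize (Hn (- D / P)).
  assert (0 < P) by lra.
  replace (Y + 2 * (- D / P) * D + - D / P * (- D / P) * P) with ((Y * P - D^2) / P) in Hn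
    by (field; auto).
  assert (0 <= Y * P - D^2).
  { apply (Rmult_le_reg_r (/ P)); [apply Rinv_0_lt_compat; auto|]. lra. }
  lra.
Qed.

Lemma U_ge d p y : sqnorm d y <= Ufun d p y.
Proof.
unfold Ufun. pose proof (CS d y p). pose proof (sqnorm_ge0' d y). nra.
Qed.

Lemma U_shift d p y k s : (k < d)%nat ->
  Ufun d p (shift y k s) = Ufun d p y
     + s * (2 * ((1 + sqnorm d p) * y k - dot d y p * p k))
     + s * s * ((1 + sqnorm d p) - p k * p k).
Proof.
intros Hk. unfold Ufun. rewrite sqnorm_shift, dot_shift by exact Hk. ring.
Qed.

Lemma dmul f g x lf lg : derivable_pt_lim f x lf -> derivable_pt_lim g x lg ->
  derivable_pt_lim (fun s => f s * g s) x (lf * g x + f x * lg).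
Proof. intros H1 H2. exact (derivable_pt_lim_mult f g x lf lg H1 H2). Qed.

Lemma dcomp f g x lf lg : derivable_pt_lim f x lf -> derivable_pt_lim g (f x) lg ->
  derivable_pt_lim (fun s => g (f s)) x (lg * lf).
Proof. intros H1 H2. exact (derivable_pt_lim_comp f g x lf lg H1 H2). Qed.

Lemma dplus f g x lf lg : derivable_pt_lim f x lf -> derivable_pt_lim g x lg ->
  derivable_pt_lim (fun s => f s + g s) x (lf + lg).
Proof. intros H1 H2. exact (derivable_pt_lim_plus f g x lf lg H1 H2). Qed.

Lemma dpoly c0 c1 c2 : derivable_pt_lim (fun s => c0 + s * c1 + s * s * c2) 0 c1.
Proof.
assert (H : derivable_pt_lim (fun s => c0 + s * c1 + s * s * c2) 0
   (0 + (1 * c1 + 0 * 0) + ((1 * 0 + 0 * 1) * c2 + 0 * 0 * 0))).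
2:{ replace (0 + (1 * c1 + 0 * 0) + ((1 * 0 + 0 * 1) * c2 + 0 * 0 * 0)) with c1 in H by ring. exact H. }
apply dplus; [apply dplus|].
- apply derivable_pt_lim_const.
- apply (dmul (fun s => s) (fun _ => c1)); [apply derivable_pt_lim_id|apply derivable_pt_lim_const].
- apply (dmul (fun s => s * s) (fun _ => c2)); [|apply derivable_pt_lim_const].
  apply (dmul (fun s => s) (fun s => s)); apply derivable_pt_lim_id.
Qed.

Definition wf d (p xi : nat -> R) (j : nat) := (1 + sqnorm d p) * xi j - dot d xi p * p j.
Definition Mf d (p : nat -> R) (j k : nat) := (if Nat.eqb j k then 1 + sqnorm d p else 0) - p j * p k.

Definition G d A p y k := / 4 * Rpower (A ^ 2 * Ufun d p y) (/ 4 - 1) * (A ^ 2 * (2 * wf d p y k)).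

Lemma partial1 d p A y k : (k < d)%nat -> 0 < A -> 0 < Ufun d p y ->
  is_partial (gammafun d A p) y k (G d A p y k).
Proof.
intros Hk HA HU. unfold is_partial, gammafun.
set (U := Ufun d p y).
set (g := 2 * ((1 + sqnorm d p) * y k - dot d y p * p k)).
set (h := (1 + sqnorm d p) - p k * p k).
replace (fun s => Rpower (A ^ 2 * Ufun d p (shift y k s)) (/ 4))
  with (fun s => Rpower (A ^ 2 * U + s * (A^2 * g) + s * s * (A^2 * h)) (/ 4)).
2:{ extensionality s. rewrite U_shift by exact Hk. unfold U, g, h. f_equal. ring. }
unfold G. replace (/ 4 * Rpower (A ^ 2 * Ufun d p y) (/ 4 - 1) * (A ^ 2 * (2 * wf d p y k)))
  with ((/ 4 * Rpower (A ^ 2 * U + 0 * (A^2 * g) + 0 * 0 * (A^2 * h)) (/ 4 - 1)) * (A^2 * g)).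
2:{ replace (A ^ 2 * U + 0 * (A ^ 2 * g) + 0 * 0 * (A ^ 2 * h))
     with (A ^ 2 * U) by ring. unfold U, g, wf. ring. }
apply (dcomp (fun s => A ^ 2 * U + s * (A^2 * g) + s * s * (A^2 * h)) (fun z => Rpower z (/4))).
- apply dpoly.
- apply derivable_pt_lim_power.
  replace (A ^ 2 * U + 0 * (A ^ 2 * g) + 0 * 0 * (A ^ 2 * h)) with (A ^ 2 * U) by ring.
  apply Rmult_lt_0_compat; [|exact HU]. apply pow_lt; exact HA.
Qed.

Lemma wf_shift d p xi j k s : (j < d)%nat ->
  wf d p (shift xi j s) k = wf d p xi k + s * Mf d p j k.
Proof.
intros Hj. unfold wf, Mf. rewrite dot_shift by exact Hj.
unfold shift. rewrite (Nat.eqb_sym k j). destruct (Nat.eqb j k); ring.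
Qed.

Definition alf d A p xi := / 2 * A ^ 2 * Rpower (A ^ 2 * Ufun d p xi) (/ 4 - 1).
Definition bef d A p xi := 3 / 4 * A ^ 4 * Rpower (A ^ 2 * Ufun d p xi) (/ 4 - 1 - 1).
Definition Hf d A p xi j k := alf d A p xi * Mf d p j k - bef d A p xi * (wf d p xi j * wf d p xi k).

Lemma dlim_eq f x l1 l2 : derivable_pt_lim f x l1 -> l1 = l2 -> derivable_pt_lim f x l2.
Proof. intros H ->; exact H. Qed.

Lemma partial2 d p A xi j k : (j < d)%nat -> 0 < A -> 0 < Ufun d p xi ->
  is_partial (fun y => G d A p y k) xi j (Hf d A p xi j k).
Proof.
intros Hj HA HU. unfold is_partial, G.
set (U := Ufun d p xi).
set (g := 2 * ((1 + sqnorm d p) * xi j - dot d xi p * p j)).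
set (h := (1 + sqnorm d p) - p j * p j).
set (m := Mf d p j k). set (wk := wf d p xi k).
replace (fun s => / 4 * Rpower (A ^ 2 * Ufun d p (shift xi j s)) (/ 4 - 1) *
      (A ^ 2 * (2 * wf d p (shift xi j s) k)))
  with (fun s => (/ 4 * Rpower (A ^ 2 * U + s * (A^2 * g) + s * s * (A^2 * h)) (/ 4 - 1)) *
      (A ^ 2 * (2 * wk) + s * (A ^ 2 * (2 * m)))).
2:{ extensionality s. rewrite U_shift by exact Hj. rewrite wf_shift by exact Hj.
    unfold U, g, h, wk, m. f_equal; [f_equal; f_equal|]; ring. }
assert (HW : 0 < A ^ 2 * U) by (apply Rmult_lt_0_compat; [apply pow_lt; exact HA|exact HU]).
set (F1 := fun s => A ^ 2 * U + s * (A^2 * g) + s * s * (A^2 * h)).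
eapply dlim_eq.
{ apply (dmul (fun s => / 4 * Rpower (F1 s) (/ 4 - 1)) (fun s => A ^ 2 * (2 * wk) + s * (A ^ 2 * (2 * m)))).
  - apply (dmul (fun _ => /4) (fun s => Rpower (F1 s) (/ 4 - 1))).
    + apply derivable_pt_lim_const.
    + apply (dcomp F1 (fun z => Rpower z (/ 4 - 1))).
      * apply dpoly.
      * apply derivable_pt_lim_power. unfold F1.
        replace (A ^ 2 * U + 0 * (A ^ 2 * g) + 0 * 0 * (A ^ 2 * h)) with (A ^ 2 * U) by ring. exact HW.
  - apply (dplus (fun _ => A ^ 2 * (2 * wk)) (fun s => s * (A ^ 2 * (2 * m)))).
    + apply derivable_pt_lim_const.
    + apply (dmul (fun s => s) (fun _ => A ^ 2 * (2 * m))).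
      * apply derivable_pt_lim_id.
      * apply derivable_pt_lim_const. }
unfold F1. replace (A ^ 2 * U + 0 * (A ^ 2 * g) + 0 * 0 * (A ^ 2 * h)) with (A ^ 2 * U) by ring.
unfold Hf, alf, bef, wk, m, g. fold U. unfold wf. field.
Qed.

Lemma sqnorm_zero n y : sqnorm n y = 0 -> forall i, (i < n)%nat -> y i = 0.
Proof.
unfold sqnorm; induction n; intros H i Hi; [lia|]. simpl in H.
pose proof (sqnorm_ge0' n y) as H0; unfold sqnorm in H0.
pose proof (Rle_0_sqr (y n)) as H1; unfold Rsqr in H1.
assert (y n * y n = 0) by lra.
destruct (Nat.eq_dec i n) as [->|Hne].
- nra.
- apply IHn; [lra|lia].
Qed.

Lemma dot_wf d p xi : dot d xi (wf d p xi) = Ufun d p xi.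
Proof.
unfold dot, wf, Ufun, sqnorm.
transitivity ((1 + rsum d (fun i => p i * p i)) * rsum d (fun i => xi i * xi i)
   + (- dot d xi p) * rsum d (fun i => xi i * p i) + 0 * rsum d (fun i => 0)).
- rewrite <- rsum_lin. apply rsum_ext; intros; unfold sqnorm; ring.
- unfold dot. ring.
Qed.

Lemma exp_le' x y : x <= y -> exp x <= exp y.
Proof. intros [H | ->]; [left; apply exp_increasing; exact H|right; reflexivity]. Qed.

Lemma ln_le' x y : 0 < x -> x <= y -> ln x <= ln y.
Proof. intros Hx [H | ->]; [left; apply ln_increasing; auto|right; reflexivity]. Qed.

Lemma al_bound A U c B : 0 < c -> c <= A -> 0 < U -> U <= B ->
  / 2 * exp (/ 2 * ln c - 3 / 4 * ln B) <= / 2 * A ^ 2 * Rpower (A ^ 2 * U) (/ 4 - 1).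
Proof.
intros Hc HA HU HB.
assert (HA0 : 0 < A) by lra.
assert (HA2 : 0 < A ^ 2) by (apply pow_lt; lra).
unfold Rpower. rewrite ln_mult by assumption. rewrite ln_pow by assumption.
replace (A ^ 2) with (exp (INR 2 * ln A)) at 1 by (rewrite <- ln_pow by assumption; apply exp_ln; assumption).
rewrite Rmult_assoc, <- exp_plus.
apply Rmult_le_compat_l; [lra|]. apply exp_le'.
pose proof (ln_le' c A Hc HA). pose proof (ln_le' U B HU HB).
simpl INR. lra.
Qed.

Lemma main_aux
  (Hdet : forall d p xi al be, al <> 0 ->
     det d (fun j k => al * Mf d p j k - be * (wf d p xi j * wf d p xi k)) =
     al ^ d * (1 - / al * be * dot d xi (wf d p xi)) *
     ((1 + sqnorm d p) ^ d * (1 - / (1 + sqnorm d p) * sqnorm d p)))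
  (d : nat) (I : R -> Prop) (a eta : R -> (nat -> R) -> R)
  (grad_eta : R -> (nat -> R) -> nat -> R) (c : R) :
  is_interval I ->
  (forall t x i, I t -> (i < d)%nat -> is_partial (eta t) x i (grad_eta t x i)) ->
  (exists K, forall t x, I t -> sqnorm d (grad_eta t x) <= K) ->
  (exists A, forall t x, I t -> Rabs (a t x) <= A) ->
  0 < c ->
  (forall t x, I t -> c <= a t x) ->
  exists c0, 0 < c0 /\
    forall t x xi, I t ->
      / 2 <= sqrt (sqnorm d xi) <= 2 ->
      exists H, is_hessian d (gammafun d (a t x) (grad_eta t x)) xi H /\
                c0 <= Rabs (det d H).
Proof.
intros _ _ [K HK] _ Hc Hca.
set (B := 4 * (1 + Rmax K 0)).
set (al0 := / 2 * exp (/ 2 * ln c - 3 / 4 * ln B)).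
assert (Hal0 : 0 < al0) by (unfold al0; pose proof (exp_pos (/ 2 * ln c - 3 / 4 * ln B)); lra).
exists (al0 ^ d * / 2). split.
{ pose proof (pow_lt al0 d Hal0). lra. }
intros t x xi It Hxi.
set (A := a t x). set (p := grad_eta t x).
assert (HA : c <= A) by (apply Hca; exact It).
assert (HA0 : 0 < A) by lra.
set (Y := sqnorm d xi).
assert (HY0 : 0 <= Y) by apply sqnorm_ge0'.
pose proof (sqrt_sqrt Y HY0) as Hsq. pose proof (sqrt_pos Y) as Hsp.
assert (HY : / 4 <= Y <= 4) by (fold Y in Hxi; nra).
assert (Hd : (0 < d)%nat).
{ destruct d; [|lia]. exfalso. unfold Y, sqnorm in HY. simpl in HY. lra. }
set (P := sqnorm d p).
assert (HP0 : 0 <= P) by apply sqnorm_ge0'.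
assert (HPK : P <= Rmax K 0) by (apply Rle_trans with K; [apply HK; exact It|apply Rmax_l]).
set (U := Ufun d p xi).
assert (HUY : Y <= U) by apply U_ge.
assert (HU0 : 0 < U) by lra.
assert (HUB : U <= B).
{ unfold U, B, Ufun. fold P. fold Y. pose proof (Rmax_r K 0).
  assert ((1 + P) * Y <= (1 + Rmax K 0) * 4) by (apply Rmult_le_compat; lra).
  nra. }
exists (Hf d A p xi). split.
- exists (/ 2), (fun y k => G d A p y k). split; [lra|]. split.
  + intros y Hy k Hk. apply partial1; [exact Hk|exact HA0|].
    apply Rlt_le_trans with (sqnorm d y); [|apply U_ge].
    destruct (sqnorm_ge0' d y) as [Hpos|Hz]; [exact Hpos|].
    exfalso. symmetry in Hz. pose proof (sqnorm_zero d y Hz) as Hy0.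
    assert (E : sqnorm d (fun i => y i - xi i) = Y).
    { unfold Y, sqnorm. apply rsum_ext. intros i Hi. rewrite Hy0 by exact Hi. ring. }
    rewrite E in Hy. lra.
  + intros j k Hj Hk. apply partial2; assumption.
- set (W := A ^ 2 * U).
  assert (HW : 0 < W) by (unfold W; apply Rmult_lt_0_compat; [apply pow_lt|]; lra).
  set (R0 := Rpower W (/ 4 - 1)).
  assert (HR0 : 0 < R0) by (unfold R0, Rpower; apply exp_pos).
  assert (Ebe : bef d A p xi = 3 / 4 * A ^ 4 * R0 * / W).
  { unfold bef. fold U. fold W.
    replace (/ 4 - 1 - 1) with ((/ 4 - 1) + - (1)) by ring.
    rewrite Rpower_plus, Rpower_Ropp, Rpower_1 by exact HW. fold R0. ring. }
  assert (Eal : alf d A p xi = / 2 * A ^ 2 * R0) by reflexivity.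
  assert (Hal : alf d A p xi <> 0).
  { rewrite Eal. pose proof (pow_lt A 2 HA0). apply Rgt_not_eq. unfold Rgt.
    apply Rmult_lt_0_compat; [|exact HR0]. lra. }
  unfold Hf. rewrite (Hdet d p xi _ _ Hal). rewrite dot_wf. fold P. fold U.
  rewrite Ebe, Eal.
  assert (E1 : 1 - / (/ 2 * A ^ 2 * R0) * (3 / 4 * A ^ 4 * R0 * / W) * U = - / 2).
  { unfold W. field. split; [lra|]. split; [lra|]. lra. }
  rewrite E1.
  destruct d as [|d']; [lia|].
  assert (E2 : (1 + P) ^ S d' * (1 - / (1 + P) * P) = (1 + P) ^ d').
  { simpl. field. lra. }
  rewrite E2.
  assert (Hs : 1 <= (1 + P) ^ d') by (apply pow_R1_Rle; lra).
  assert (Hb : al0 <= / 2 * A ^ 2 * R0) by (apply al_bound; assumption).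
  assert (Hpow : al0 ^ S d' <= (/ 2 * A ^ 2 * R0) ^ S d') by (apply pow_incr; lra).
  pose proof (pow_lt al0 (S d') Hal0).
  rewrite Rabs_left1.
  + nra.
  + pose proof (pow_lt (/ 2 * A ^ 2 * R0) (S d')). nra.
Qed.

Module MC.
From HB Require Import structures.
From mathcomp Require Import all_boot all_order all_algebra.
From mathcomp Require Import Rstruct.
Set Implicit Arguments. Unset Strict Implicit. Unset Printing Implicit Defensive.
Import Order.TTheory GRing.Theory Num.Theory.
Open Scope R_scope.

Lemma det_S n A : det (S n) A = rsum (S n) (fun j =>
      (-1) ^ j * A O j *
      det n (fun i k => A (S i) (if Nat.ltb k j then k else S k))).
Proof. reflexivity. Qed.
Section MC.
Local Open Scope ring_scope.

Lemma powE (x : R) (n : nat) : pow x n = x ^+ n.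
Proof. elim: n => [|n IH] //=; by rewrite exprS IH. Qed.

Lemma ltbE a b : Nat.ltb a b = (a < b)%N.
Proof.
case: (Nat.ltb_spec a b) => h; apply/esym; first by apply/ssrnat.ltP.
by apply/negbTE; rewrite -leqNgt; apply/ssrnat.leP.
Qed.

Lemma rsumE n (f : nat -> R) : rsum n f = \sum_(i < n) f i.
Proof. elim: n => [|n IH] /=; first by rewrite big_ord0. by rewrite big_ord_recr /= IH. Qed.

Lemma detE n (A : nat -> nat -> R) : det n A = \det (\matrix_(i < n, j < n) A i j).
Proof.
elim: n A => [|n IH] A; first by rewrite /= det_mx00.
rewrite det_S.
rewrite (expand_det_row _ ord0) rsumE; apply: eq_bigr => j _.
rewrite IH mxE /cofactor add0n powE.
have -> : \matrix_(i < n, k < n) A i.+1 (if Nat.ltb k j then nat_of_ord k else k.+1)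
   = row' ord0 (col' j (\matrix_(i < n.+1, j0 < n.+1) A i j0)).
  apply/matrixP => i k; rewrite !mxE /= /bump.
  rewrite ltbE; case: (ltnP k j) => h.
    by [].
  by [].
rewrite !RmultE mulrA [_ * A _ _]mulrC.
by [].

Qed.

Lemma rank1 n (u : 'cV[R]_n) (v : 'rV[R]_n) :
  \det (1%:M + u *m v) = 1 + (v *m u) 0 0.
Proof.
pose X := block_mx (1%:M : 'M[R]_n) (- u) v (1%:M : 'M[R]_1).
have E1 : X = block_mx 1%:M 0 v 1%:M *m block_mx 1%:M (- u) 0 (1%:M + v *m u).
  rewrite mulmx_block !mul1mx !mulmx1 !mul0mx !addr0 mulmxN.
  by rewrite [_ + (1%:M + _)]addrC addrK.
have E2 : X = block_mx (1%:M + u *m v) (- u) 0 1%:M *m block_mx 1%:M 0 v 1%:M.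
  rewrite mulmx_block !mul1mx !mulmx1 !mul0mx !mulmx0 !add0r mulNmx.
  by rewrite addrK.
have H2 : \det X = \det (1%:M + u *m v).
  by rewrite E2 det_mulmx det_ublock det_lblock !det1 !mulr1.
have H1 : \det X = 1 + (v *m u) 0 0.
  by rewrite E1 det_mulmx det_ublock det_lblock !det1 !mul1r det_mx11 !mxE eqxx mulr1n.
by rewrite -H2 H1.
Qed.
End MC.

Section MC2.
Local Open Scope ring_scope.
Variables (n : nat) (p x : 'cV[R]_n) (s al be : R).
Hypothesis (hal : al != 0) (hs : s != 0).
Let Mm : 'M[R]_n := s%:M - p *m p^T.
Let w : 'cV[R]_n := Mm *m x.

Lemma MmT : Mm^T = Mm.
Proof. by rewrite /Mm linearB /= tr_scalar_mx trmx_mul trmxK. Qed.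

Lemma detrank1 a (u : 'cV[R]_n) (v : 'rV[R]_n) : a != 0 ->
  \det (a%:M + u *m v) = a ^+ n * (1 + a^-1 * (v *m u) 0 0).
Proof.
move=> ha.
have -> : a%:M + u *m v = a *: (1%:M + (a^-1 *: u) *m v).
  by rewrite scalerDr scalemx1 -scalemxAl scalerA divff // scale1r.
rewrite detZ rank1 -scalemxAr mxE //.
Qed.

Lemma detMm : \det Mm = s ^+ n * (1 - s^-1 * (p^T *m p) 0 0).
Proof.
rewrite /Mm.
have -> : s%:M - p *m p^T = s%:M + (- p) *m p^T by rewrite mulNmx.
rewrite detrank1 // mulmxN mxE mulrN; reflexivity.
Qed.

Lemma detH : \det (al *: Mm - be *: (w *m w^T)) =
  al ^+ n * (1 - al^-1 * be * (x^T *m w) 0 0) * \det Mm.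
Proof.
have -> : al *: Mm - be *: (w *m w^T) = (al%:M + (- (be *: w)) *m x^T) *m Mm.
  rewrite /w trmx_mul MmT !mulmxA.
  by rewrite [RHS]mulmxDl mul_scalar_mx !mulNmx -!scalemxAl.
rewrite det_mulmx detrank1 // mulmxN -scalemxAr.
have -> : (- (be *: (x^T *m w))) 0 0 = - (be * (x^T *m w) 0 0) by rewrite !mxE.
by rewrite mulrN mulrA.
Qed.

End MC2.

Lemma eqbE a b : Nat.eqb a b = (a == b).
Proof. by case: (Nat.eqb_spec a b) => h; apply/esym; [apply/eqP|apply/eqP]. Qed.

Lemma sP_pos d p : 0 < 1 + sqnorm d p.
Proof. have := sqnorm_ge0' d p; lra. Qed.

Definition HfA d pf xi al be (j k : nat) :=
  Rminus (Rmult al (Mf d pf j k)) (Rmult be (Rmult (wf d pf xi j) (wf d pf xi k))).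

Section Bridge.
Local Open Scope ring_scope.
Lemma lin2E m n (A B : 'M[R]_(m,n)) a b j k : (a *: A - b *: B) j k = a * A j k - b * B j k.
Proof. by rewrite !mxE. Qed.
Lemma outer n (u v : 'cV[R]_n) j k : (u *m v^T) j k = (u j 0 * v k 0).
Proof. by rewrite mxE big_ord1 mxE. Qed.

Variables (d : nat) (pf xi : nat -> R) (al be : R).
Hypothesis hal : al != 0.
Let p : 'cV[R]_d := \col_i pf i.
Let x : 'cV[R]_d := \col_i xi i.
Let s : R := Rplus 1 (sqnorm d pf).
Let Mm : 'M[R]_d := s%:M - p *m p^T.
Let w : 'cV[R]_d := Mm *m x.

Lemma hs : s != 0.
Proof.
move: (sP_pos d pf); rewrite /s => H; apply/eqP => h.
rewrite h in H; exact: (Rlt_irrefl _ H).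
Qed.

Lemma wE j : w j 0 = wf d pf xi j.
Proof.
rewrite /w /Mm mulmxBl mul_scalar_mx -mulmxA /wf /dot rsumE.
rewrite !mxE big_ord1 !mxE [pf j * _]mulrC.
congr (_ - _ * _); apply: eq_bigr => k _; by rewrite !mxE mulrC.
Qed.

Lemma PE : (p^T *m p) 0 0 = sqnorm d pf.
Proof. rewrite /sqnorm rsumE !mxE; apply: eq_bigr => k _; by rewrite !mxE. Qed.

Lemma QE : (x^T *m w) 0 0 = dot d xi (wf d pf xi).
Proof. rewrite /dot rsumE mxE; apply: eq_bigr => k _; by rewrite wE !mxE. Qed.

Lemma HE : \matrix_(j < d, k < d) HfA d pf xi al be j k = al *: Mm - be *: (w *m w^T).
Proof.
apply/matrixP => j k; rewrite lin2E outer !wE /Mm !mxE big_ord1 !mxE /HfA /Mf eqbE.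
have -> : (j == k) = (nat_of_ord j == k) by [].
by case: (nat_of_ord j == k).
Qed.

Lemma det_bridge : det d (HfA d pf xi al be) =
  al ^+ d * (1 - al^-1 * be * dot d xi (wf d pf xi)) * (s ^+ d * (1 - s^-1 * sqnorm d pf)).
Proof. by rewrite detE HE detH // -QE detMm ?hs // PE. Qed.


End Bridge.

Lemma det_formula d p xi al be : al <> 0 ->
     det d (fun j k => al * Mf d p j k - be * (wf d p xi j * wf d p xi k)) =
     al ^ d * (1 - / al * be * dot d xi (wf d p xi)) *
     ((1 + sqnorm d p) ^ d * (1 - / (1 + sqnorm d p) * sqnorm d p)).
Proof.
move=> hal. have hal' : (al != 0)%R by apply/eqP.
have := @det_bridge d p xi al be hal'. rewrite /HfA => ->.
by rewrite !powE.
Qed.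

End MC.

Theorem corollary3p7 (d : nat) (I : R -> Prop) (a eta : R -> (nat -> R) -> R)
  (grad_eta : R -> (nat -> R) -> nat -> R) (c : R) :
  is_interval I ->
  (* grad_eta is the spatial gradient of eta *)
  (forall t x i, I t -> (i < d)%nat -> is_partial (eta t) x i (grad_eta t x i)) ->
  (* grad eta bounded *)
  (exists K, forall t x, I t -> sqnorm d (grad_eta t x) <= K) ->
  (* a bounded *)
  (exists A, forall t x, I t -> Rabs (a t x) <= A) ->
  0 < c ->
  (forall t x, I t -> c <= a t x) ->
  exists c0, 0 < c0 /\
    forall t x xi, I t ->
      / 2 <= sqrt (sqnorm d xi) <= 2 ->
      exists H, is_hessian d (gammafun d (a t x) (grad_eta t x)) xi H /\
                c0 <= Rabs (det d H).
Proof.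
  exact (main_aux MC.det_formula d I a eta grad_eta c).
Qed.
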